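(* For all ordered graphs $G$ and $H$ there exists an integer $N_{G,H}$ such that $r_o(G,H)=r_o(G,H;N_{G,H})$.
   Context: An ordered graph $G$ on $n$ vertices has vertex set $[n]=\{1,\dots,n\}$ with the natural linear order. An ordered graph $G$ on $[n]$ is contained in an ordered graph $H$ on a linearly ordered vertex set if there is an injective map $f$ from $[n]$ to $V(H)$ with $f(i)<f(j)$ whenever $i<j$ and $f(i)f(j)\in E(H)$ whenever $ij\in E(G)$; such an image is an ordered copy of $G$. The ordered Ramsey number $r_<(G,H)$ is the least $N$ such that every red/blue coloring of the edges of the complete graph on $[N]$ contains an ordered red copy of $G$ or an ordered blue copy of $H$. The online ordered Ramsey game for $(G_1,G_2)$ is played by Builder and Painter on a linearly ordered vertex set. On each turn Builder selects a previously unselected pair of vertices (an edge) and Painter then colors it red or blue. Builder wins as soon as the colored edges contain an ordered red copy of $G_1$ or an ordered blue copy of $G_2$; Builder tries to minimize and Painter tries to maximize the number of turns. The online ordered Ramsey number $r_o(G_1,G_2)$ is the number of turns after which Builder wins under optimal play when the game is played on $\mathbb N$. For $N\ge r_<(G_1,G_2)$, the restricted number $r_o(G_1,G_2;N)$ is the number of turns after which Builder wins under optimal play when the game is played on the vertex set $[N]$. *)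

(* Defs.v *)
From mathcomp Require Import all_boot.
Set Implicit Arguments. Unset Strict Implicit. Unset Printing Implicit Defensive.

(* An ordered graph on [n] = {1,...,n}: its number of vertices and its edge
   relation; the edge ij (i < j) is present iff [oedge i j]. Only pairs
   1 <= i < j <= n are ever consulted. *)
Record ograph := OGraph { onv : nat; oedge : rel nat }.

Definition color := bool.
Definition red : color := true.
Definition blue : color := false.

(* A position of the game: the list of selected edges (u,v), u < v, with
   the colour Painter gave them. *)
Definition state := seq ((nat * nat) * color).

Definition contains_copy (V : pred nat) (s : state) (c : color) (G : ograph) : Prop :=
  exists f : nat -> nat,
    (forall i, 1 <= i <= onv G -> V (f i)) /\
    (forall i j, 1 <= i -> i < j -> j <= onv G -> f i < f j) /\
    (forall i j, 1 <= i -> i < j -> j <= onv G -> oedge G i j ->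
        ((f i, f j), c) \in s).

Definition builder_won (V : pred nat) (G1 G2 : ograph) (s : state) : Prop :=
  contains_copy V s red G1 \/ contains_copy V s blue G2.

(* [builder_wins V G1 G2 k s]: from position [s] of the online ordered Ramsey
   game for (G1,G2) on vertex set V, Builder can force a win within at most
   [k] further turns, whatever Painter does. *)
Inductive builder_wins (V : pred nat) (G1 G2 : ograph) : nat -> state -> Prop :=
  | bw_done k s : builder_won V G1 G2 s -> builder_wins V G1 G2 k s
  | bw_move k s u v :
      u < v -> V u -> V v -> (u, v) \notin map fst s ->
      builder_wins V G1 G2 k (((u, v), red) :: s) ->
      builder_wins V G1 G2 k (((u, v), blue) :: s) ->
      builder_wins V G1 G2 k.+1 s.

Definition online_value (V : pred nat) (G1 G2 : ograph) (k : nat) : Prop :=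
  builder_wins V G1 G2 k [::] /\ forall k', k' < k -> ~ builder_wins V G1 G2 k' [::].

Definition allV : pred nat := predT.
Definition segV (N : nat) : pred nat := fun v => (1 <= v) && (v <= N).

(* Every red/blue colouring of the complete graph on [N] contains a red
   ordered copy of G1 or a blue ordered copy of G2; by monotonicity this
   is equivalent to N >= r_<(G1,G2). A colouring is a function [col] giving
   the colour [col u v] of the edge uv, u < v. *)
Definition contains_copy_col (V : pred nat) (col : nat -> nat -> color)
    (c : color) (G : ograph) : Prop :=
  exists f : nat -> nat,
    (forall i, 1 <= i <= onv G -> V (f i)) /\
    (forall i j, 1 <= i -> i < j -> j <= onv G -> f i < f j) /\
    (forall i j, 1 <= i -> i < j -> j <= onv G -> oedge G i j ->
        col (f i) (f j) = c).

Definition ramsey_arrow (N : nat) (G1 G2 : ograph) : Prop :=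
  forall col : nat -> nat -> color,
    contains_copy_col (segV N) col red G1 \/ contains_copy_col (segV N) col blue G2.

(* Main.v *)
Require Import Defs.
From mathcomp Require Import all_boot.
From Stdlib Require Import Classical.
From mathcomp Require Import zify.

Definition mrel (col : nat -> nat -> color) (c : color) : rel nat :=
  fun x y => (x < y) && (col x y == c).

Lemma ramsey_seq a b : exists R, forall col (S : seq nat), pairwise ltn S -> R <= size S ->
  exists T, subseq T S /\ ((a <= size T /\ pairwise (mrel col red) T) \/
                            (b <= size T /\ pairwise (mrel col blue) T)).
Proof.
elim: a b => [|a IHa] b.
  by exists 0 => col S _ _; exists [::]; split; [exact: sub0seq | left].
elim: b => [|b IHb].
  by exists 0 => col S _ _; exists [::]; split; [exact: sub0seq | right].
have [R1 H1] := IHa b.+1.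
have [R2 H2] := IHb.
exists (R1 + R2).+1 => col [|x S'] //= HS Hsz.
move: HS => /= /andP [Hx HS'].
have Hcnt := count_predC (fun y => col x y) S'.
have [Hr | Hb] : R1 <= count (fun y => col x y) S' \/ R2 <= count (predC (fun y => col x y)) S'.
  case: (leqP R1 (count (fun y => col x y) S')) => h; first by left.
  by right; lia.
- have Hp : pairwise ltn (filter (fun y => col x y) S') by exact: (subseq_pairwise (filter_subseq _ _)).
  have [T [HT [[HaT HrT] | [HbT HbT']]]] := H1 col _ Hp ltac:(by rewrite size_filter).
  + exists (x :: T); split.
      by rewrite /= eqxx; exact: (subseq_trans HT (filter_subseq _ _)).
    left; split; first by [].
    rewrite pairwise_cons HrT andbT; apply/allP => y Hy.
    have Hy' := mem_subseq HT Hy; rewrite mem_filter in Hy'.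
    case/andP: Hy' => Hc Hy''.
    apply/andP; split; [exact: (allP Hx _ Hy'') | by rewrite Hc].
  + exists T; split; last by right.
    exact: (subseq_trans HT (subseq_trans (filter_subseq _ _) (subseq_cons _ _))).
- have Hp : pairwise ltn (filter (predC (fun y => col x y)) S') by exact: (subseq_pairwise (filter_subseq _ _)).
  have [T [HT [[HaT HrT] | [HbT HbT']]]] := H2 col _ Hp ltac:(by rewrite size_filter).
  + exists T; split; last by left.
    exact: (subseq_trans HT (subseq_trans (filter_subseq _ _) (subseq_cons _ _))).
  + exists (x :: T); split.
      by rewrite /= eqxx; exact: (subseq_trans HT (filter_subseq _ _)).
    right; split; first by [].
    rewrite pairwise_cons HbT' andbT; apply/allP => y Hy.
    have Hy' := mem_subseq HT Hy; rewrite mem_filter in Hy'.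
    case/andP: Hy' => Hc Hy''.
    apply/andP; split; [exact: (allP Hx _ Hy'') | ].
    by move: Hc; rewrite /= /blue; case: (col x y).
Qed.

Lemma copy_of_seq R col c (G : ograph) T :
  subseq T (iota 1 R) -> onv G <= size T -> pairwise (mrel col c) T ->
  contains_copy_col (segV R) col c G.
Proof.
move=> Hsub Hsz Hpw.
exists (fun i => nth 0 T i.-1); split; [|split].
- move=> i /andP [h1 h2]; have Hin : nth 0 T i.-1 \in T by apply: mem_nth; apply: (leq_trans _ Hsz); lia.
  have := mem_subseq Hsub Hin; rewrite mem_iota /segV => /andP [a1 a2]; apply/andP; split; lia.
- move=> i j h1 h2 h3.
  have H := (elimT (pairwiseP 0) Hpw) i.-1 j.-1; rewrite !inE /= in H.

  have : mrel col c (nth 0 T i.-1) (nth 0 T j.-1) by apply: H; rewrite ?inE /=; [apply: (leq_trans _ Hsz); lia | apply: (leq_trans _ Hsz); lia | lia].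
  by case/andP.
- move=> i j h1 h2 h3 _.
  have H := (elimT (pairwiseP 0) Hpw) i.-1 j.-1; rewrite !inE /= in H.

  have : mrel col c (nth 0 T i.-1) (nth 0 T j.-1) by apply: H; rewrite ?inE /=; [apply: (leq_trans _ Hsz); lia | apply: (leq_trans _ Hsz); lia | lia].
  by case/andP => _ /eqP.
Qed.

Lemma ramsey_exists (G H : ograph) : exists R, ramsey_arrow R G H.
Proof.
have [R HR] := ramsey_seq (onv G) (onv H).
exists R => col.
have Hp : pairwise ltn (iota 1 R) by rewrite -sorted_pairwise ?iota_ltn_sorted //; exact: ltn_trans.
have [T [HT [[h1 h2]|[h1 h2]]]] := HR col _ Hp ltac:(by rewrite size_iota).
- by left; exact: (@copy_of_seq R col red G T HT h1 h2).
- by right; exact: (@copy_of_seq R col blue H T HT h1 h2).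
Qed.
Set Implicit Arguments. Unset Strict Implicit.

Lemma copy_sub V s s' c G : {subset s <= s'} -> contains_copy V s c G -> contains_copy V s' c G.
Proof. move=> Hs [f [h1 [h2 h3]]]; exists f; split=> //; split=> // i j a b d e; apply: Hs; exact: h3. Qed.

Lemma copy_monoV (V W : pred nat) s c G : (forall x, V x -> W x) -> contains_copy V s c G -> contains_copy W s c G.
Proof. move=> HVW [f [h1 [h2 h3]]]; exists f; split=> // i hi; apply: HVW; exact: h1. Qed.

Lemma bw_mono (V W : pred nat) G H k s : (forall x, V x -> W x) ->
  builder_wins V G H k s -> builder_wins W G H k s.
Proof.
move=> HVW; elim=> {k s} [k s [h|h] | k s u v huv hu hv hn _ IH1 _ IH2].
- by apply: bw_done; left; exact: (copy_monoV HVW h).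
- by apply: bw_done; right; exact: (copy_monoV HVW h).
- by apply: bw_move huv (HVW _ hu) (HVW _ hv) hn IH1 IH2.
Qed.

Definition shiftS (s : state) : state := map (fun e => ((e.1.1.+1, e.1.2.+1), e.2)) s.

Lemma copy_shift s c G : contains_copy allV s c G ->
  exists B, forall N, B <= N -> contains_copy (segV N) (shiftS s) c G.
Proof.
move=> [f [_ [h2 h3]]]; exists (f (onv G)).+1 => N hN.
exists (fun i => (f i).+1); split; [|split].
- move=> i /andP [a b]; rewrite /segV; apply/andP; split=> //.
  case: (ltngtP i (onv G)) => hi; last by rewrite hi; lia.
  + have := h2 i (onv G) a hi (leqnn _); lia.
  + lia.
- by move=> i j a b d; have := h2 i j a b d.
- move=> i j a b d e; apply/mapP; exists ((f i, f j), c) => //; exact: h3.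
Qed.

Lemma bw_shift G H k s : builder_wins allV G H k s ->
  exists B, forall N, B <= N -> builder_wins (segV N) G H k (shiftS s).
Proof.
elim=> {k s} [k s [h|h] | k s u v huv hu hv hn _ [B1 IH1] _ [B2 IH2]].
- have [B HB] := copy_shift h; exists B => N hN; apply: bw_done; left; exact: HB.
- have [B HB] := copy_shift h; exists B => N hN; apply: bw_done; right; exact: HB.
- exists (maxn (maxn B1 B2) v.+1) => N hN.
  apply: (@bw_move _ _ _ _ _ u.+1 v.+1).
  + by [].
  + rewrite /segV; apply/andP; split=> //; lia.
  + rewrite /segV; apply/andP; split=> //; lia.
  + apply/negP => /mapP [[[x y] c] /mapP [[[x' y'] c'] Hin [ex ey ec]] /= [e1 e2]].
    move/negP: hn; apply; apply/mapP; exists ((x', y'), c') => //=.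
    by congr pair; lia.
  + apply: IH1; lia.
  + apply: IH2; lia.
Qed.

Lemma ex_min (P : nat -> Prop) k : P k -> exists m, P m /\ forall k', k' < m -> ~ P k'.
Proof.
elim: k {-2}k (leqnn k) => [|n IH] k hk Pk.
  exists k; split=> // k' hk'; lia.
case: (classic (exists k', k' < k /\ P k')) => [[k' [h1 h2]]|hn].
  apply: (IH k') => //; lia.
exists k; split=> // k' hk' Pk'; apply: hn; by exists k'.
Qed.
Definition colL (col : nat -> nat -> color) (L : seq (nat * nat)) : state :=
  map (fun e => (e, col e.1 e.2)) L.

Lemma play_all (V : pred nat) (G H : ograph) (L : seq (nat * nat)) (s : state) : uniq L ->
  (forall e, e \in L -> [/\ e.1 < e.2, V e.1, V e.2 & e \notin map fst s]) ->
  (forall col, builder_won V G H (colL col L ++ s)) -> builder_wins V G H (size L) s.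
Proof.
elim: L s => [|[u v] L IH] s /=.
  by move=> _ _ Hw; apply: bw_done; exact: (Hw (fun _ _ => true)).
move=> /andP [hnot huniq] Hc Hw.
have [h1 h2 h3 h4] := Hc (u, v) (mem_head _ _).
have Hstep : forall c, builder_wins V G H (size L) (((u, v), c) :: s).
  move=> c; apply: IH => //.
    move=> e he; have [a1 a2 a3 a4] := Hc e ltac:(by rewrite in_cons he orbT).
    split=> //; rewrite /= in_cons negb_or a4 andbT.
    by apply/negP => /eqP ee; move: hnot; rewrite -ee he.
  move=> col.
  pose col' := fun x y => if (x, y) == (u, v) then c else col x y.
  have Hsub : {subset colL col' ((u, v) :: L) ++ s <= colL col L ++ ((u, v), c) :: s}.
    move=> x; rewrite /= in_cons mem_cat => /orP [/eqP ->|/orP [hx|hx]].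
    - by rewrite mem_cat in_cons /col' /= !eqxx orbT.
    - move: hx => /mapP [e he ->]; rewrite mem_cat; apply/orP; left.
      have ne : (e.1, e.2) != (u, v).
        by case: e he => a b he /=; apply/eqP => ee; move: hnot; rewrite -ee he.
      rewrite /col' (negbTE ne); exact: (map_f (fun e => (e, col e.1 e.2)) he).
    - by rewrite mem_cat in_cons hx !orbT.
  case: (Hw col') => h; [left|right]; exact: (copy_sub Hsub h).
exact: (bw_move h1 h2 h3 h4 (Hstep red) (Hstep blue)).
Qed.

Definition allL R : seq (nat * nat) :=
  filter (fun e => e.1 < e.2) [seq (x, y) | x <- iota 1 R, y <- iota 1 R].

Lemma allV_wins R G H : ramsey_arrow R G H -> exists k, builder_wins allV G H k [::].
Proof.
move=> HR; exists (size (allL R)); apply: play_all.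
- rewrite filter_uniq //; apply: allpairs_uniq; try exact: iota_uniq.
  by move=> [a b] [c d] _ _ /= [-> ->].
- by move=> e; rewrite mem_filter => /andP [h _].
- move=> col; rewrite cats0.
  have cp : forall c G', contains_copy_col (segV R) col c G' -> contains_copy allV (colL col (allL R)) c G'.
    move=> c G' [f [a [b d]]]; exists f; split=> //; split=> // i j x y z w.
    rewrite -(d i j x y z w); apply: (map_f (fun e => (e, col e.1 e.2))).
    rewrite mem_filter /= (b i j x y z) /=; apply: allpairs_f; rewrite mem_iota.
    + have := a i ltac:(lia); rewrite /segV; lia.
    + have := a j ltac:(lia); rewrite /segV; lia.
  by case: (HR col) => h; [left|right]; apply: cp.
Qed.

Lemma copy_col_mono (V W : pred nat) col c G : (forall x, V x -> W x) ->
  contains_copy_col V col c G -> contains_copy_col W col c G.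
Proof. move=> HVW [f [h1 [h2 h3]]]; exists f; split=> // i hi; apply: HVW; exact: h1. Qed.

Theorem lemma7 (G H : ograph) :
  exists N : nat, ramsey_arrow N G H /\
    exists k : nat, online_value allV G H k /\ online_value (segV N) G H k.
Proof.
have [R HR] := ramsey_exists G H.
have [k0 Hk0] := allV_wins HR.
have [k [Hk Hmin]] := @ex_min (fun k => builder_wins allV G H k [::]) k0 Hk0.
have [B HB] := bw_shift Hk.
have Hsub : forall x, segV R x -> segV (maxn R B) x.
  by move=> x; rewrite /segV => /andP [a b]; apply/andP; split=> //; lia.
exists (maxn R B); split.
  move=> col; case: (HR col) => h; [left|right]; exact: (copy_col_mono Hsub h).
exists k; split; split=> //.
- have := HB (maxn R B) (leq_maxr _ _); rewrite /shiftS /=; by [].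
- move=> k' hk' hw; apply: (Hmin k' hk'); exact: (bw_mono (V := segV (maxn R B)) (W := allV) (fun x _ => isT) hw).
Qed.
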